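(* Let $X$ be a non-empty compact ultrametric space with a finite similarity structure $\mathrm{Sim}_X$ and let $\Gamma=\Gamma(\mathrm{Sim}_X)$. Under the action of $\Gamma$ on the set of vertices given by $\gamma\{[f_1,B_1],\dots,[f_k,B_k]\}=\{[\gamma f_1,B_1],\dots,[\gamma f_k,B_k]\}$, the stabilizer in $\Gamma$ of every vertex is finite.
   Context: A *ball* in $X$ is a closed metric ball of positive radius. A *finite similarity structure* $\mathrm{Sim}_X$ assigns to each ordered pair of balls $B_1,B_2$ a finite (possibly empty) set $\mathrm{Sim}_X(B_1,B_2)$ of surjective similarities $B_1\to B_2$, closed under identities, inverses, compositions, and restrictions to sub-balls (if $h\in\mathrm{Sim}_X(B_1,B_2)$ and $B_3\subseteq B_1$ is a ball, $h|_{B_3}\in\mathrm{Sim}_X(B_3,h(B_3))$). An embedding $h:B\to X$ ($B$ a ball) is *locally determined by* $\mathrm{Sim}_X$ if every $x\in B$ lies in a ball $B'\subseteq B$ with $h(B')$ a ball and $h|_{B'}\in\mathrm{Sim}_X(B',h(B'))$. $\Gamma(\mathrm{Sim}_X)$ is the group of homeomorphisms $X\to X$ locally determined by $\mathrm{Sim}_X$. Let $\mathcal S$ be the set of pairs $(f,B)$ with $B$ a ball and $f:B\to X$ an embedding locally determined by $\mathrm{Sim}_X$; $(f_1,B_1)\sim(f_2,B_2)$ iff $f_2h=f_1$ for some $h\in\mathrm{Sim}_X(B_1,B_2)$; $[f,B]$ is the class (for $\gamma\in\Gamma$, $[\gamma f,B]$ is a well-defined class). A *vertex* is a finite set $\{[f_1,B_1],\dots,[f_k,B_k]\}$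 of classes with $f_1(B_1),\dots,f_k(B_k)$ pairwise disjoint and with union $X$. *)

(* Defs.v *)
From Stdlib Require Import Reals List.
Open Scope R_scope.

Section Defs.
Variables (X : Type) (d : X -> X -> R).

Definition is_ultrametric : Prop :=
  (forall x y, 0 <= d x y) /\
  (forall x y, d x y = 0 <-> x = y) /\
  (forall x y, d x y = d y x) /\
  (forall x y z, d x z <= Rmax (d x y) (d y z)).

Definition is_open (U : X -> Prop) : Prop :=
  forall x, U x -> exists r, 0 < r /\ forall y, d x y < r -> U y.

Definition is_compact : Prop :=
  forall (I : Type) (U : I -> X -> Prop),
    (forall i, is_open (U i)) -> (forall x, exists i, U i x) ->
    exists l : list I, forall x, exists i, In i l /\ U i x.

Definition is_ball (B : X -> Prop) : Prop :=
  exists c r, 0 < r /\ forall y, B y <-> d c y <= r.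

Definition image (f : X -> X) (B : X -> Prop) : X -> Prop :=
  fun y => exists x, B x /\ f x = y.

Definition agree_on (B : X -> Prop) (f g : X -> X) : Prop :=
  forall x, B x -> f x = g x.

Definition same_set (A B : X -> Prop) : Prop := forall x, A x <-> B x.

(** surjective similarity B1 -> B2 (maps are total functions; only the
    values on B1 matter) *)
Definition is_similarity (B1 B2 : X -> Prop) (h : X -> X) : Prop :=
  (exists lam, 0 < lam /\ forall x y, B1 x -> B1 y -> d (h x) (h y) = lam * d x y) /\
  (forall x, B1 x -> B2 (h x)) /\
  (forall y, B2 y -> exists x, B1 x /\ h x = y).

(** finite similarity structure; [sim B1 B2 h] means "(the restriction to B1
    of) h belongs to Sim_X(B1,B2)". *)
Record FinSimStructure := {
  sim : (X -> Prop) -> (X -> Prop) -> (X -> X) -> Prop;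
  sim_wd : forall B1 B2 h, sim B1 B2 h ->
     is_ball B1 /\ is_ball B2 /\ is_similarity B1 B2 h;
  sim_saturated : forall B1 B2 h B1' B2' h', sim B1 B2 h ->
     same_set B1 B1' -> same_set B2 B2' -> agree_on B1 h h' -> sim B1' B2' h';
  sim_finite : forall B1 B2, exists l : list (X -> X),
     forall h, sim B1 B2 h -> exists h', In h' l /\ agree_on B1 h h';
  sim_id : forall B, is_ball B -> sim B B (fun x => x);
  sim_inv : forall B1 B2 h, sim B1 B2 h -> exists g, sim B2 B1 g /\
     (forall x, B1 x -> g (h x) = x) /\ (forall y, B2 y -> h (g y) = y);
  sim_comp : forall B1 B2 B3 h g, sim B1 B2 h -> sim B2 B3 g ->
     sim B1 B3 (fun x => g (h x));
  sim_restr : forall B1 B2 B3 h, sim B1 B2 h -> is_ball B3 ->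
     (forall x, B3 x -> B1 x) -> sim B3 (image h B3) h
}.

Variable S : FinSimStructure.

Definition continuous_on (B : X -> Prop) (f : X -> X) : Prop :=
  forall x, B x -> forall eps, 0 < eps -> exists delta, 0 < delta /\
    forall y, B y -> d x y < delta -> d (f x) (f y) < eps.

Definition is_embedding (B : X -> Prop) (f : X -> X) : Prop :=
  (forall x y, B x -> B y -> f x = f y -> x = y) /\
  continuous_on B f /\
  (forall x, B x -> forall eps, 0 < eps -> exists delta, 0 < delta /\
    forall y, B y -> d (f x) (f y) < delta -> d x y < eps).

Definition is_homeomorphism (f : X -> X) : Prop :=
  continuous_on (fun _ => True) f /\
  exists g, (forall x, g (f x) = x) /\ (forall y, f (g y) = y) /\
            continuous_on (fun _ => True) g.

Definition locally_determined (B : X -> Prop) (h : X -> X) : Prop :=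
  forall x, B x -> exists B', is_ball B' /\ (forall y, B' y -> B y) /\ B' x /\
    is_ball (image h B') /\ sim S B' (image h B') h.

Definition in_Gamma (g : X -> X) : Prop :=
  is_homeomorphism g /\ locally_determined (fun _ => True) g.

Definition in_calS (p : (X -> X) * (X -> Prop)) : Prop :=
  is_ball (snd p) /\ is_embedding (snd p) (fst p) /\
  locally_determined (snd p) (fst p).

Definition calS_equiv (p q : (X -> X) * (X -> Prop)) : Prop :=
  exists h, sim S (snd p) (snd q) h /\ forall x, snd p x -> fst q (h x) = fst p x.

Definition dflt_pair : (X -> X) * (X -> Prop) := (fun x => x, fun _ => False).

(** a vertex, given by a list of representatives of its classes *)
Definition is_vertex (v : list ((X -> X) * (X -> Prop))) : Prop :=
  (forall p, In p v -> in_calS p) /\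
  (forall i j, (i < length v)%nat -> (j < length v)%nat -> i <> j ->
     forall y, image (fst (nth i v dflt_pair)) (snd (nth i v dflt_pair)) y ->
               ~ image (fst (nth j v dflt_pair)) (snd (nth j v dflt_pair)) y) /\
  (forall y, exists p, In p v /\ image (fst p) (snd p) y).

Definition act (g : X -> X) (p : (X -> X) * (X -> Prop)) : (X -> X) * (X -> Prop) :=
  (fun x => g (fst p x), snd p).

(** g v = v as sets of classes *)
Definition stabilizes (g : X -> X) (v : list ((X -> X) * (X -> Prop))) : Prop :=
  (forall p, In p v -> exists q, In q v /\ calS_equiv (act g p) q) /\
  (forall q, In q v -> exists p, In p v /\ calS_equiv (act g p) q).

End Defs.

(* Main.v *)
Require Import Defs.
From Stdlib Require Import Reals List.
From Stdlib Require Import ClassicalEpsilon FunctionalExtensionality Lia.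

Fixpoint allL {A : Type} (n : nat) (P : list A) : list (list A) :=
  match n with
  | O => nil :: nil
  | S n' => flat_map (fun a => map (cons a) (allL n' P)) P
  end.

Lemma allL_in {A : Type} (P : list A) : forall c,
  (forall a, In a c -> In a P) -> In c (allL (length c) P).
Proof.
  induction c as [|a c IH]; intros H; simpl; [now left|].
  apply in_flat_map. exists a. split; [apply H; now left|].
  apply in_map. apply IH. intros b Hb; apply H; now right.
Qed.

Lemma build_list {A : Type} (P : list A) (dflt : A) : forall n (R : nat -> A -> Prop),
  (forall i, (i < n)%nat -> exists a, In a P /\ R i a) ->
  exists c, length c = n /\ (forall a, In a c -> In a P) /\
    forall i, (i < n)%nat -> R i (nth i c dflt).
Proof.
  induction n as [|n IH]; intros R H.
  - exists nil. simpl. repeat split; intros; [contradiction|lia].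
  - destruct (H 0%nat ltac:(lia)) as [a0 [Ha0 Ra0]].
    destruct (IH (fun i a => R (S i) a)) as [c [Hl [Hc Hr]]].
    { intros i Hi. apply H. lia. }
    exists (a0 :: c). simpl. split; [lia|]. split.
    + intros a [<-|Ha]; auto.
    + intros [|i] Hi; auto. apply Hr. lia.
Qed.

Theorem lemma6p2 (X : Type) (d : X -> X -> R)
  (Hult : is_ultrametric X d) (Hcpt : is_compact X d) (Hne : inhabited X)
  (S : FinSimStructure X d) (v : list ((X -> X) * (X -> Prop)))
  (Hv : is_vertex X d S v) :
  exists l : list (X -> X),
    forall g, in_Gamma X d S g -> stabilizes X d S g v -> In g l.
Proof.
  destruct Hv as [_ [_ Hcov]].
  set (dp := dflt_pair X).
  assert (Hsel : forall y, exists ix : nat * X, (fst ix < length v)%nat /\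
      snd (nth (fst ix) v dp) (snd ix) /\ fst (nth (fst ix) v dp) (snd ix) = y).
  { intros y. destruct (Hcov y) as [p [Hp [x [Hx Hfx]]]].
    destruct (In_nth v p dp Hp) as [i [Hi Hni]].
    exists (i, x). simpl. rewrite Hni. auto. }
  set (sel := fun y => proj1_sig (constructive_indefinite_description _ (Hsel y))).
  assert (Hselp : forall y, (fst (sel y) < length v)%nat /\
      snd (nth (fst (sel y)) v dp) (snd (sel y)) /\
      fst (nth (fst (sel y)) v dp) (snd (sel y)) = y).
  { intros y. unfold sel. destruct (constructive_indefinite_description _ (Hsel y)). exact a. }
  set (L := fun p q : (X -> X) * (X -> Prop) =>
    proj1_sig (constructive_indefinite_description _ (sim_finite X d S (snd p) (snd q)))).
  assert (HL : forall p q h, sim X d S (snd p) (snd q) h ->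
     exists h', In h' (L p q) /\ agree_on X (snd p) h h').
  { intros p q. unfold L.
    destruct (constructive_indefinite_description _ (sim_finite X d S (snd p) (snd q))).
    exact e. }
  set (P := flat_map (fun p => flat_map (fun q => map (fun h => (q, h)) (L p q)) v) v).
  set (da := (dp, fun x : X => x)).
  set (F := fun (c : list (((X -> X) * (X -> Prop)) * (X -> X))) (y : X) =>
     fst (fst (nth (fst (sel y)) c da)) (snd (nth (fst (sel y)) c da) (snd (sel y)))).
  exists (map F (allL (length v) P)).
  intros g _ [Hst _].
  destruct (build_list P da (length v)
    (fun i a => forall x, snd (nth i v dp) x ->
        fst (fst a) (snd a x) = g (fst (nth i v dp) x))) as [c [Hlen [HcP Hc]]].
  { intros i Hi.
    destruct (Hst (nth i v dp) (nth_In v dp Hi)) as [q [Hq [h [Hsim Hh]]]].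
    simpl in Hsim, Hh.
    destruct (HL _ _ _ Hsim) as [h' [Hh' Hag]].
    exists (q, h'). split.
    - unfold P. apply in_flat_map. exists (nth i v dp). split; [apply nth_In; auto|].
      apply in_flat_map. exists q. split; auto. apply in_map. auto.
    - intros x Hx. simpl. rewrite <- (Hag x Hx). apply Hh. exact Hx. }
  replace g with (F c).
  - apply in_map. rewrite <- Hlen. apply allL_in. exact HcP.
  - apply functional_extensionality. intros y. unfold F.
    destruct (Hselp y) as [Hi [Hx Hy]].
    rewrite (Hc _ Hi _ Hx). rewrite Hy. reflexivity.
Qed.
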